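(* Let $n\in\mathbb{N}$, $n\ge1$, and $\Delta,\Delta'\in\mathcal{P}_n$. Then $f^{(\Delta)}_{32,n}\neq f^{(\Delta')}_{32,n}$ if and only if there exists $i\in\mathbb{Z}_n$ such that one of the following holds: (1) $lab_\Delta((i+1,i))=lab_\Delta((i-1,i))=\oplus$ and ($lab_{\Delta'}((i+1,i))=\ominus$ or $lab_{\Delta'}((i-1,i))=\ominus$); (2) $lab_{\Delta'}((i+1,i))=lab_{\Delta'}((i-1,i))=\oplus$ and ($lab_\Delta((i+1,i))=\ominus$ or $lab_\Delta((i-1,i))=\ominus$).
   Context: Cells are indexed by $\mathbb{Z}_n=\{0,\dots,n-1\}$, indices modulo $n$. Rule $32$ has local rule $r_{32}(x_1,x_2,x_3)=x_1\wedge\neg x_2\wedge x_3$ and global function $f_{32,n}(x)_i=r_{32}(x_{i-1},x_i,x_{i+1})$. An update schedule is an ordered partition $\Delta=(\Delta_1,\dots,\Delta_k)$ of $\mathbb{Z}_n$ into nonempty blocks; $\mathcal{P}_n$ is the set of them. For a block $B$ let $f^{(B)}(x)_i=f_{32,n}(x)_i$ if $i\in B$ and $x_i$ otherwise; $f^{(\Delta)}_{32,n}=f^{(\Delta_k)}\circ\cdots\circ f^{(\Delta_1)}$. (The paper phrases the conclusion as inequality of the transition digraphs with arcs $(x,f^{(\Delta)}_{32,n}(x))$, which is equivalent to inequality of the maps.) For $u,v\in\mathbb{Z}_n$ with $u\in\Delta_a$, $v\in\Delta_b$, $lab_\Delta((u,v))=\oplus$ if $b\le a$ and $\ominus$ if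 $a<b$. *)

(* Defs.v *)
From mathcomp Require Import all_boot.
Set Implicit Arguments. Unset Strict Implicit. Unset Printing Implicit Defensive.

Definition config (n : nat) := {ffun 'I_n -> bool}.

Definition nxt {n} (i : 'I_n) : 'I_n := ordS i.
Definition prv {n} (i : 'I_n) : 'I_n := ord_pred i.

Definition r32 (x1 x2 x3 : bool) : bool := [&& x1, ~~ x2 & x3].

Definition f32 {n} (x : config n) : config n :=
  [ffun i => r32 (x (prv i)) (x i) (x (nxt i))].

(* An update schedule (ordered partition (D_0,...,D_{k-1}) of Z_n into nonempty
   blocks) is given by k and the surjective block-index map blk; D_j = blk^-1(j). *)
Record schedule (n : nat) := Schedule {
  sch_k : nat;
  sch_blk : 'I_n -> 'I_sch_k;
  sch_surj : forall j : 'I_sch_k, exists i : 'I_n, sch_blk i = j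
}.

Definition block_update {n : nat} (D : schedule n) (j : 'I_(sch_k D)) (x : config n)
  : config n :=
  [ffun i => if sch_blk D i == j then f32 x i else x i].

Definition f32_sched {n} (D : schedule n) (x : config n) : config n :=
  foldl (fun (y : config n) (j : 'I_(sch_k D)) => @block_update n D j y) x (enum 'I_(sch_k D)).

Inductive label := oplus | ominus.

Definition lab {n} (D : schedule n) (u v : 'I_n) : label :=
  if (sch_blk D v <= sch_blk D u)%N then oplus else ominus.

(* Main.v *)
Require Import Defs.
From mathcomp Require Import all_boot.

Section S.
Variables (n : nat) (D : schedule n).
Local Notation blk := (sch_blk D).

Definition bo (i : 'I_n) : bool := (blk i <= blk (nxt i))%N && (blk i <= blk (prv i))%N.
Definition yv (x : config n) (i : 'I_n) : bool := bo i && f32 x i.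

Definition Pinv (x : config n) (m : nat) (st : config n) :=
  forall i, st i = if (blk i < m)%N then yv x i else x i.

Lemma step_ok x st (j : 'I_(sch_k D)) :
  Pinv x j st -> Pinv x j.+1 (block_update j st).
Proof.
move=> H i; rewrite /block_update ffunE.
case: eqVneq => [Hij|Hij].
  rewrite Hij ltnSn /f32 ffunE.
  have Hi : st i = x i by rewrite H Hij ltnn.
  rewrite Hi !H /yv /bo /f32 !ffunE /nxt /prv ordSK ord_predK /r32 -Hij.
  case: ltnP => Hp; case: ltnP => Hq; rewrite ?andbF ?andbT ?andFb //=.
  - by case: (x i); rewrite ?andbF.
  - by case: (x i); rewrite ?andbF.
  - by case: (x i); rewrite ?andbF.
rewrite H; congr (if _ then _ else _).
symmetry; rewrite ltnS.
have E : (nat_of_ord (blk i) == nat_of_ord j) = false.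
  by apply/negbTE; move: Hij; apply: contra => /eqP/val_inj ->.
by rewrite leq_eqVlt E.
Qed.

Lemma fold_ok x : forall (s : seq 'I_(sch_k D)) st m,
  map val s = iota m (size s) -> Pinv x m st ->
  Pinv x (m + size s) (foldl (fun y j => block_update j y) st s).
Proof.
elim=> [|j s IH] st m /=; first by move=> _ H; rewrite addn0.
move=> E H; case: E => Hj Hs; rewrite addnS -addSn; apply: IH => //.
by subst m; apply: step_ok.
Qed.

Lemma sched_val x i : f32_sched D x i = yv x i.
Proof.
have := @fold_ok x (enum 'I_(sch_k D)) x 0.
rewrite val_enum_ord size_enum_ord add0n => /(_ erefl).
have H0 : Pinv x 0 x by move=> j.
move=> /(_ H0 i); rewrite ltn_ord => <-. by [].
Qed.

End S.
Arguments bo {n} D i.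
Arguments yv {n} D x i.

Lemma lab_op n (D : schedule n) u v : (lab D u v = oplus) <-> (sch_blk D v <= sch_blk D u)%N.
Proof. by rewrite /lab; case: leqP. Qed.

Lemma lab_om n (D : schedule n) u v : (lab D u v = ominus) <-> ~~ (sch_blk D v <= sch_blk D u)%N.
Proof. by rewrite /lab; case: leqP. Qed.

Theorem mainTheorem13 (n : nat) (Hn : (1 <= n)%N) (D D' : schedule n) :
  ~ (forall x : config n, f32_sched D x = f32_sched D' x) <->
  exists i : 'I_n,
    (lab D (nxt i) i = oplus /\ lab D (prv i) i = oplus /\
     (lab D' (nxt i) i = ominus \/ lab D' (prv i) i = ominus)) \/
    (lab D' (nxt i) i = oplus /\ lab D' (prv i) i = oplus /\
     (lab D (nxt i) i = ominus \/ lab D (prv i) i = ominus)).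
Proof.
split.
- move=> Hne.
  case: (boolP [exists i, bo D i != bo D' i]).
    case/existsP=> i Hi; exists i; move: Hi; rewrite /bo /lab.
    case: (sch_blk D i <= sch_blk D (nxt i))%N; case: (sch_blk D i <= sch_blk D (prv i))%N;
    case: (sch_blk D' i <= sch_blk D' (nxt i))%N; case: (sch_blk D' i <= sch_blk D' (prv i))%N;
    by rewrite //=; tauto.
  rewrite negb_exists => /forallP Hall; exfalso; apply: Hne => x.
  apply/ffunP => i; rewrite !sched_val /yv.
  by have := Hall i; rewrite negbK => /eqP ->.
- case=> i Hi Heq.
  have key : bo D i != bo D' i.
    move: Hi; rewrite /bo /lab.
    case: (sch_blk D i <= sch_blk D (nxt i))%N; case: (sch_blk D i <= sch_blk D (prv i))%N;
    case: (sch_blk D' i <= sch_blk D' (nxt i))%N; case: (sch_blk D' i <= sch_blk D' (prv i))%N;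
    by rewrite //=; case=> [[? [? [?|?]]]|[? [? [?|?]]]].
  case: (eqVneq (prv i) i) => Hp.
    have Hq : nxt i = i by rewrite -{1}Hp /nxt /prv ord_predK.
    by move: key; rewrite /bo Hp Hq !leqnn.
  have Hq : nxt i != i.
    apply: contra Hp => /eqP Hq; apply/eqP.
    by rewrite -{1}Hq /nxt /prv ordSK.
  pose x : config n := [ffun j => j != i].
  have := Heq x; move/ffunP/(_ i); rewrite !sched_val /yv.
  have -> : f32 x i = true by rewrite /f32 /x !ffunE /r32 Hp Hq eqxx.
  by rewrite !andbT => E; move: key; rewrite E eqxx.
Qed.
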